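(* Let $G_1,\dots,G_n$ be finite groups and let $K$ be a simplicial complex on $[n]$ whose 1-skeleton $K^1$ is a chordal graph. Then the image of the faithful representation $\Theta_K:\prod_{K^1}G_i\to\mathrm{Aut}(F_{\rho_K})$ is not contained in the subgroup $\mathrm{IA}_{\rho_K}$.
   Context: $\prod_{K^1}G_i$ is the graph product: the quotient of $G_1*\cdots*G_n$ by the normal closure of $[g_i,g_j]$ for $g_i\in G_i,g_j\in G_j$, $\{i,j\}$ an edge of $K^1$. $F_{\rho_K}$ is the kernel of the natural projection $\prod_{K^1}G_i\to G_1\times\cdots\times G_n$, free of rank $\rho_K$ when $K^1$ is chordal, and $\Theta_K(g)(h)=ghg^{-1}$. $\mathrm{IA}_N$ is the kernel of the map $\mathrm{Aut}(F_N)\to\mathrm{GL}(N,\mathbb Z)$ induced by the action on $H_1(F_N)=\mathbb Z^N$. A graph is chordal if every cycle of length greater than three has an edge joining two nonconsecutive vertices. *)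

(* Defs.v *)
From mathcomp Require Import all_boot all_order all_fingroup.
Set Implicit Arguments. Unset Strict Implicit. Unset Printing Implicit Defensive.
Local Open Scope group_scope.

Definition simplicial_complex (n : nat) (K : {set {set 'I_n}}) : Prop :=
  (forall i : 'I_n, [set i] \in K) /\
  (forall s t : {set 'I_n}, s \in K -> t \subset s -> t \in K).

Definition skel1 (n : nat) (K : {set {set 'I_n}}) : rel 'I_n :=
  fun i j => (i != j) && ([set i; j] \in K).

Definition chordal (n : nat) (adj : rel 'I_n) : Prop :=
  forall (s : seq 'I_n) (v0 : 'I_n), uniq s -> 3 < size s ->
    (forall k, k < size s -> adj (nth v0 s k) (nth v0 s (k.+1 %% size s))) ->
    exists a b, [/\ (a < size s) && (b < size s), a != b,
                    b != (a.+1 %% size s), a != (b.+1 %% size s) &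
                    adj (nth v0 s a) (nth v0 s b)].

(** Words in the free product G_1 * ... * G_n: sequences of letters (i, g), g in G_i. *)
Definition letter (n : nat) (G : 'I_n -> finGroupType) := {i : 'I_n & G i}.
Definition word (n : nat) (G : 'I_n -> finGroupType) := seq (letter G).

Definition inv_letter n (G : 'I_n -> finGroupType) (u : letter G) : letter G :=
  existT _ (tag u) (tagged u)^-1.
Definition inv_word n (G : 'I_n -> finGroupType) (w : word G) : word G :=
  rev (map (@inv_letter n G) w).

(** Equality in the graph product over the graph [adj]: the congruence on words
    generated by (i,1) = empty, (i,x)(i,y) = (i,xy), and (i,x)(j,y) = (j,y)(i,x)
    for adj i j.  (Since each generator is invertible this monoid presentation
    presents the group  prod_{adj} G_i.) *)
Inductive gp_eq n (G : 'I_n -> finGroupType) (adj : rel 'I_n) : word G -> word G -> Prop :=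
  | gp_refl w : gp_eq adj w w
  | gp_sym u v : gp_eq adj u v -> gp_eq adj v u
  | gp_trans u v w : gp_eq adj u v -> gp_eq adj v w -> gp_eq adj u w
  | gp_ctx a b u v : gp_eq adj u v -> gp_eq adj (a ++ u ++ b) (a ++ v ++ b)
  | gp_one i : gp_eq adj [:: existT _ i (1 : G i)] [::]
  | gp_mul i (x y : G i) : gp_eq adj [:: existT _ i x; existT _ i y] [:: existT _ i (x * y)]
  | gp_comm i j (x : G i) (y : G j) : adj i j ->
      gp_eq adj [:: existT _ i x; existT _ j y] [:: existT _ j y; existT _ i x].

(** The i-th coordinate of the natural projection prod_{K^1} G_i -> G_1 x ... x G_n. *)
Definition proj n (G : 'I_n -> finGroupType) (i : 'I_n) (w : word G) : G i :=
  foldr (fun u acc => @untag _ (fun j => G j) (G i) 1 i (fun x : G i => x) u * acc) 1 w.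

Definition in_kernel n (G : 'I_n -> finGroupType) (w : word G) : Prop :=
  forall i, proj i w = 1.

Inductive comm_prod n (G : 'I_n -> finGroupType) : word G -> Prop :=
  | cp_nil : comm_prod [::]
  | cp_cons a b w : in_kernel a -> in_kernel b -> comm_prod w ->
      comm_prod (a ++ b ++ inv_word a ++ inv_word b ++ w).

(** Membership in the commutator subgroup [F,F] of F, inside prod_{adj} G_i. *)
Definition in_derived n (G : 'I_n -> finGroupType) (adj : rel 'I_n) (w : word G) : Prop :=
  exists w', comm_prod w' /\ gp_eq adj w w'.

(* Main.v *)
Require Import Defs.
From mathcomp Require Import all_boot all_order all_fingroup.
From mathcomp Require Import all_algebra zify.
From Stdlib Require Import Lia.
Local Open Scope group_scope.
Notation Z := int.
Local Open Scope group_scope.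
Set Implicit Arguments. Unset Strict Implicit.

Section Aux.
Variables (n : nat) (G : 'I_n -> finGroupType).

Definition ut (m : 'I_n) (u : letter G) : G m :=
  @untag _ (fun k => G k) (G m) 1 m (fun z : G m => z) u.

Lemma ut_same m (z : G m) : ut m (existT _ m z) = z.
Proof. by rewrite /ut (@untagE _ _ _ 1 m (fun z : G m => z) (existT _ m z) (erefl m)). Qed.

Lemma ut_diff m k (z : G k) : k != m -> ut m (existT _ k z) = 1.
Proof. by move=> ne; rewrite /ut untag_dflt. Qed.

Lemma ut1 m k : ut m (existT _ k (1 : G k)) = 1.
Proof. by case: (eqVneq k m) => [<-|ne]; rewrite ?ut_same ?ut_diff. Qed.

Lemma ut_mul m k (a b : G k) :
  ut m (existT _ k a) * ut m (existT _ k b) = ut m (existT _ k (a * b)).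
Proof. by case: (eqVneq k m) => [<-|ne]; rewrite ?ut_same ?ut_diff ?mulg1. Qed.

Lemma ut_comm m k l (a : G k) (b : G l) : k != l ->
  ut m (existT _ k a) * ut m (existT _ l b) = ut m (existT _ l b) * ut m (existT _ k a).
Proof.
move=> ne; case: (eqVneq k m) => [ek|nk].
  have nl : l != m by rewrite -ek eq_sym.
  by rewrite (ut_diff (m:=m) b nl) mulg1 mul1g.
by rewrite (ut_diff (m:=m) a nk) mulg1 mul1g.
Qed.

Lemma ut_inv m u : ut m (inv_letter u) = (ut m u)^-1.
Proof.
case: u => k a; rewrite /inv_letter /=.
by case: (eqVneq k m) => [<-|ne]; rewrite ?ut_same ?ut_diff ?invg1.
Qed.

Lemma inv_word_cons (u : letter G) (w : word G) : inv_word (u :: w) = inv_word w ++ [:: inv_letter u].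
Proof. by rewrite /inv_word /= rev_cons cats1. Qed.

Lemma gp_cons (adj : rel 'I_n) (a : letter G) (u v : word G) : gp_eq adj u v -> gp_eq adj (a :: u) (a :: v).
Proof.
move=> h; have := gp_ctx [:: a] [::] h; by rewrite /= !cats0.
Qed.

Lemma gp_catr (adj : rel 'I_n) (b u v : word G) : gp_eq adj u v -> gp_eq adj (u ++ b) (v ++ b).
Proof. by move=> h; have := gp_ctx [::] b h. Qed.

Variables (i j : 'I_n) (x : G i) (y : G j).

Definition st := (G i * G j)%type.
Definition step (s : st) (u : letter G) : st := (s.1 * ut i u, s.2 * ut j u).
Definition fz (s : st) : Z := if s == (x, y) then 1%R else 0%R.
Definition D (s : st) (u : letter G) : Z :=
  if tag u == i then (fz (step s u) - fz s)%R else 0%R.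
Fixpoint psi (s : st) (w : word G) : Z :=
  match w with [::] => 0%R | u :: w' => (D s u + psi (step s u) w')%R end.
Definition endst (s : st) (w : word G) := foldl step s w.

Lemma psi_cat s a b : psi s (a ++ b) = (psi s a + psi (endst s a) b)%R.
Proof. elim: a s => [|u a IH] s /=; [lia | rewrite IH; lia]. Qed.

Lemma endst_cat s a b : endst s (a ++ b) = endst (endst s a) b.
Proof. by rewrite /endst foldl_cat. Qed.

Lemma endst_proj s w : endst s w = (s.1 * proj i w, s.2 * proj j w).
Proof.
elim: w s => [|u w IH] s /=; first by rewrite !mulg1; case: s.
by rewrite IH /step /= !mulgA.
Qed.

Lemma step1 s (k : 'I_n) : step s (existT _ k (1 : G k)) = s.
Proof. by rewrite /step !ut1 !mulg1; case: s. Qed.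

Lemma stepM s k (a b : G k) :
  step (step s (existT _ k a)) (existT _ k b) = step s (existT _ k (a * b)).
Proof. by rewrite /step /= -!mulgA !ut_mul. Qed.

Lemma stepC s k l (a : G k) (b : G l) : k != l ->
  step (step s (existT _ k a)) (existT _ l b) = step (step s (existT _ l b)) (existT _ k a).
Proof. by move=> ne; rewrite /step /= -!mulgA !(ut_comm _ _ _ ne). Qed.

Lemma step_id s k (a : G k) : k != i -> k != j -> step s (existT _ k a) = s.
Proof. by move=> ni nj; rewrite /step !ut_diff // !mulg1; case: s. Qed.

Lemma psi_inv s w : psi s (w ++ inv_word w) = 0%R /\ endst s (w ++ inv_word w) = s.
Proof.
elim: w s => [|u w IH] s /=; first by rewrite /inv_word.
rewrite inv_word_cons catA /= (psi_cat _ (w ++ _)) -/(endst (step s u) _) (endst_cat _ (w ++ _)).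
have [-> ->] := IH (step s u).
have ee : step (step s u) (inv_letter u) = s.
  by rewrite /step /= !ut_inv !mulgK; case: s.
split; last by rewrite /endst /= ee.
rewrite /= /D /= ee; case: ifP => _; lia.
Qed.

Lemma endst_ker a : in_kernel a -> forall s, endst s a = s.
Proof. by move=> ka s; rewrite endst_proj !ka !mulg1; case: s. Qed.

Lemma psi_kernel_inv s a : in_kernel a ->
  psi s (inv_word a) = (- psi s a)%R /\ endst s (inv_word a) = s.
Proof.
move=> ka; have [h1 h2] := psi_inv s a.
have ea := endst_ker ka s.
rewrite psi_cat ea in h1; rewrite endst_cat ea in h2; split=> //; lia.
Qed.

Lemma psi_comm_prod w : comm_prod w -> forall s, psi s w = 0%R.
Proof.
elim=> [|a b w' ka kb _ IH] s //.
have ea := endst_ker ka; have eb := endst_ker kb.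
have [pa ea'] := psi_kernel_inv s ka.
have [pb eb'] := psi_kernel_inv s kb.
rewrite psi_cat ea psi_cat eb psi_cat ea' psi_cat eb' pa pb IH; lia.
Qed.

Lemma psi_gp (adj : rel 'I_n) : ~~ adj i j -> ~~ adj j i ->
  (forall k l, adj k l -> k != l) ->
  forall u v, gp_eq adj u v -> forall s, psi s u = psi s v /\ endst s u = endst s v.
Proof.
move=> nij nji irr u v; elim => {u v}.
- by [].
- by move=> u v _ IH s; have [-> ->] := IH s.
- by move=> u v w _ IH1 _ IH2 s; have [-> ->] := IH1 s; have [-> ->] := IH2 s.
- move=> a b u v _ IH s; rewrite !psi_cat !endst_cat.
  by have [-> ->] := IH (endst s a).
- move=> k s /=; rewrite /D /= step1; split=> //; case: ifP => _; lia.
- move=> k a b s /=; rewrite /endst /= stepM; split=> //.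
  rewrite /D /= stepM; case: ifP => _; lia.
- move=> k l a b hkl s; have ne := irr _ _ hkl.
  rewrite /= /endst /= stepC //; split=> //; rewrite /D /=.
  case: (eqVneq k i) => [eki|nki]; case: (eqVneq l i) => [eli|nli] /=.
  + by rewrite eki eli eqxx in ne.
  + have nlj : l != j.
      by apply/eqP => elj; move: hkl; rewrite eki elj (negbTE nij).
    rewrite !(step_id _ b nli nlj); lia.
  + have nkj : k != j.
      by apply/eqP => ekj; move: hkl; rewrite eli ekj (negbTE nji).
    rewrite !(step_id _ a nki nkj); lia.
  + lia.
Qed.

End Aux.


Section NF.
Variables (n : nat) (G : 'I_n -> finGroupType) (adj : rel 'I_n).
Hypothesis hswap : forall k l (a : G k) (b : G l), k != l ->
  gp_eq adj [:: existT _ k a; existT _ l b] [:: existT _ l b; existT _ k a].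

Definition cs (s : seq 'I_n) (p : forall m, G m) : word G :=
  [seq existT (fun m => G m) m (p m) | m <- s].

Lemma proj_cons m (u : letter G) (w : word G) : proj m (u :: w) = ut m u * proj m w.
Proof. by []. Qed.

Lemma absorb s p (u : letter G) : uniq s -> tag u \in s ->
  gp_eq adj (u :: cs s p) (cs s (fun m => ut m u * p m)).
Proof.
elim: s p u => [|i s IH] p u //= /andP [nis us].
case: u => k a /=; rewrite inE; case: (eqVneq k i) => [eki|nki] /= hk.
  subst k.
  have -> : cs s (fun m => ut m (existT _ i a) * p m) = cs s p.
    apply/eq_in_map => m ms; rewrite ut_diff ?mul1g //.
    by apply/eqP => e; move: nis; rewrite e ms.
  rewrite ut_same; exact: (gp_catr (cs s p) (gp_mul adj a (p i))).
rewrite (ut_diff (m:=i) a nki) mul1g.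
apply: gp_trans; first exact: (gp_catr (cs s p) (hswap a (p i) nki)).
by apply: gp_cons; apply: IH.
Qed.

Lemma cs_one s : gp_eq adj (cs s (fun m => 1)) [::].
Proof.
elim: s => [|i s IH] /=; first exact: gp_refl.
apply: gp_trans IH; exact: (gp_catr (cs s (fun m => 1)) (@gp_one n G adj i)).
Qed.

Lemma nf (w : word G) : gp_eq adj w (cs (enum 'I_n) (fun m => proj m w)).
Proof.
elim: w => [|u w IH]; first exact: gp_sym (cs_one _).
apply: gp_trans; first exact: gp_cons IH.
by apply: absorb; rewrite ?enum_uniq ?mem_enum.
Qed.

Lemma ker_triv (w : word G) : in_kernel w -> gp_eq adj w [::].
Proof.
move=> kw; apply: gp_trans (nf w) _.
have -> : cs (enum 'I_n) (fun m => proj m w) = cs (enum 'I_n) (fun m => 1).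
  by apply/eq_map => m; rewrite kw.
exact: cs_one.
Qed.
End NF.

Theorem corollary5p5 (n : nat) (G : 'I_n -> finGroupType)
    (K : {set {set 'I_n}}) (HK : simplicial_complex K)
    (Hchordal : chordal (skel1 K))
    (Hrho : exists h : word G, in_kernel h /\ ~ gp_eq (skel1 K) h [::]) :
  exists (g h : word G), in_kernel h /\
    ~ in_derived (skel1 K) (g ++ h ++ inv_word g ++ inv_word h).
Proof.
have irr : forall k l, skel1 K k l -> k != l by move=> k l /andP [].
have sym : forall k l, skel1 K k l = skel1 K l k.
  by move=> k l; rewrite /skel1 eq_sym setUC.
case: (boolP [exists i, [exists j, [exists x : G i, [exists y : G j,
   [&& i != j, ~~ skel1 K i j, x != 1 & y != 1]]]]]).
- case/existsP => i /existsP [j /existsP [x /existsP [y /and4P [hij nadj hx hy]]]].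
  have hji : j != i by rewrite eq_sym.
  have nadj' : ~~ skel1 K j i by rewrite sym.
  exists [:: existT _ i x], [:: existT _ i x; existT _ j y; existT _ i x^-1; existT _ j y^-1].
  split.
    move=> m; rewrite !proj_cons /= mulg1.
    case: (eqVneq i m) => [<-|nim].
      by rewrite !ut_same !(ut_diff (m:=i) _ hji) !mul1g mulg1 mulgV.
    rewrite !(ut_diff (m:=m) _ nim) !mul1g.
    case: (eqVneq j m) => [<-|njm].
      by rewrite !ut_same mulgV.
    by rewrite !(ut_diff (m:=m) _ njm) !mulg1.
  move=> [w' [cw heq]].
  have [hp _] := psi_gp x y nadj nadj' irr heq (1, 1).
  rewrite (psi_comm_prod x y cw) in hp.
  move: hp; rewrite /inv_word /inv_letter /= /D /step /= !invgK.
  rewrite eqxx (negbTE hji) !ut_same !(ut_diff (m:=i) _ hji) !(ut_diff (m:=j) _ hij).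
  rewrite !mulg1 !mul1g !mulgK !mulgV !mul1g.
  have hxx : (x * x == x) = false.
    apply/negbTE; apply: contra hx => /eqP e.
    by rewrite -(mulKg x x) e mulVg.
  have h1x : (1 == x) = false by rewrite eq_sym (negbTE hx).
  have h1y : (1 == y) = false by rewrite eq_sym (negbTE hy).
  rewrite /fz !xpair_eqE hxx h1x h1y !eqxx /=.
  lia.
- move=> hno; exfalso; case: Hrho => h [kh nh]; apply: nh.
  apply: ker_triv kh => k l a b ne.
  case hkl : (skel1 K k l); first exact: gp_comm.
  have hne : ~~ [&& k != l, ~~ skel1 K k l, a != 1 & b != 1].
    apply: contra hno => hc; apply/existsP; exists k; apply/existsP; exists l.
    by apply/existsP; exists a; apply/existsP; exists b.
  rewrite ne hkl /= in hne.
  case: (eqVneq a 1) => [-> | na]; last first.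
    have eb : b = 1 by apply/eqP; move: hne; rewrite na /= negbK.
    rewrite eb; apply: gp_trans; first exact: (gp_cons (existT _ k a) (@gp_one n G _ l)).
    apply: gp_sym; exact: (gp_catr [:: existT _ k a] (@gp_one n G _ l)).
  apply: gp_trans; first exact: (gp_catr [:: existT _ l b] (@gp_one n G _ k)).
  apply: gp_sym; exact: (gp_cons (existT _ l b) (@gp_one n G _ k)).
Qed.
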